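(* Let $(E,P,\vartheta)$ be a bipolar metric space and let $F\colon E\cup P\to E\cup P$ satisfy $F(E)\subseteq E$, $F(P)\subseteq P$. Assume there exist $\pi\in(0,1)$, an integer $\sigma\geq1$ and constants $q_1,\dots,q_\sigma,H_1,\dots,H_\sigma\in(0,\infty)$ such that $$\sum_{\upsilon=1}^{\sigma}q_\upsilon\,\vartheta^\upsilon(Fe,Ff)\leq\pi\sum_{\upsilon=1}^{\sigma}q_\upsilon\big[\vartheta^\upsilon(e,f)+H_\upsilon\,\vartheta^\upsilon(Fe,f)\big]\quad\text{for all } e\in E,\ f\in P.$$ Then $F$ is Picard-continuous.
   Context: A bipolar metric space is a triple $(E,P,\vartheta)$ where $E,P$ are nonempty sets and $\vartheta\colon E\times P\to[0,\infty)$ satisfies: (1) for $e\in E$, $f\in P$, $\vartheta(e,f)=0$ iff $e=f$; (2) $\vartheta(e,f)=\vartheta(f,e)$ whenever $e,f\in E\cap P$; (3) $\vartheta(e,f)\leq\vartheta(e,z)+\vartheta(r,z)+\vartheta(r,f)$ for all $e,r\in E$, $z,f\in P$. $F$ is Picard-continuous if for all $g\in E$, $h\in P$: $\lim_{n\to\infty}\vartheta(F^ng,h)=0$ implies $\lim_{n\to\infty}\vartheta(F(F^ng),Fh)=0$, where $F^0g=g$, $F^{n+1}g=F(F^ng)$. $\vartheta^\upsilon$ denotes the $\upsilon$-th power of $\vartheta$. *)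

(* Defs.v *)
From Stdlib Require Import Reals.
Open Scope R_scope.

(* A bipolar metric space (E,P,theta): E and P are subsets (predicates) of a
   common ambient type X (so that E ∩ P and E ∪ P make sense); theta is a
   function X -> X -> R of which only the values on E × P matter. *)
Definition bipolar_metric_space {X : Type} (E P : X -> Prop)
  (theta : X -> X -> R) : Prop :=
  (exists e, E e) /\ (exists p, P p) /\
  (forall e f, E e -> P f -> 0 <= theta e f) /\
  (forall e f, E e -> P f -> (theta e f = 0 <-> e = f)) /\
  (forall e f, E e -> P e -> E f -> P f -> theta e f = theta f e) /\
  (forall e r z f, E e -> E r -> P z -> P f ->
     theta e f <= theta e z + theta r z + theta r f).

Fixpoint iterF {X : Type} (F : X -> X) (n : nat) (g : X) : X :=
  match n with
  | O => g
  | S m => F (iterF F m g)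
  end.

Definition picard_continuous {X : Type} (E P : X -> Prop)
  (theta : X -> X -> R) (F : X -> X) : Prop :=
  forall g h, E g -> P h ->
    Un_cv (fun n => theta (iterF F n g) h) 0 ->
    Un_cv (fun n => theta (F (iterF F n g)) (F h)) 0.

Fixpoint sum1 (s : nat) (a : nat -> R) : R :=
  match s with
  | O => 0
  | S m => sum1 m a + a (S m)
  end.

(* Main.v *)
Require Import Defs.
From Stdlib Require Import Reals Lra Lia.
Open Scope R_scope.

Lemma pow_cv (x : nat -> R) l u : Un_cv x l -> Un_cv (fun n => x n ^ u) (l ^ u).
Proof.
  intro Hx. induction u as [|u IH]; simpl.
  - intros eps He. exists 0%nat. intros. unfold R_dist. rewrite Rminus_diag, Rabs_R0. lra.
  - apply CV_mult; auto.
Qed.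

Lemma sum1_cv (a : nat -> nat -> R) (L : nat -> R) s :
  (forall u, Un_cv (fun n => a n u) (L u)) -> Un_cv (fun n => sum1 s (a n)) (sum1 s L).
Proof.
  intro Ha. induction s as [|s IH]; simpl.
  - intros eps He. exists 0%nat. intros. unfold R_dist. rewrite Rminus_diag, Rabs_R0. lra.
  - apply CV_plus; auto.
Qed.

Lemma sum1_ge1 (a : nat -> R) s : (1 <= s)%nat ->
  (forall u, (1 <= u <= s)%nat -> 0 <= a u) -> a 1%nat <= sum1 s a.
Proof.
  induction s as [|s IH]; intros Hs Ha; [lia|].
  simpl. destruct s as [|s].
  - simpl. lra.
  - assert (a 1%nat <= sum1 (S s) a) by (apply IH; [lia| intros; apply Ha; lia]).
    assert (0 <= a (S (S s))) by (apply Ha; lia). lra.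
Qed.

Lemma sum1_zero (q H : nat -> R) s :
  sum1 s (fun u => q u * (0 ^ u + H u * 0 ^ u)) = 0.
Proof. induction s as [|s IH]; simpl; [reflexivity|]. rewrite IH. ring. Qed.

Lemma iter_E {X} (E : X -> Prop) (F : X -> X) g n :
  (forall e, E e -> E (F e)) -> E g -> E (iterF F n g).
Proof. intros HF Hg. induction n; simpl; auto. Qed.

Theorem proposition4p4 (X : Type) (E P : X -> Prop) (theta : X -> X -> R)
  (F : X -> X)
  (Hbms : bipolar_metric_space E P theta)
  (HFE : forall e, E e -> E (F e))
  (HFP : forall p, P p -> P (F p))
  (pi : R) (Hpi : 0 < pi < 1)
  (sigma : nat) (Hsigma : (1 <= sigma)%nat)
  (q H : nat -> R)
  (Hq : forall u, (1 <= u <= sigma)%nat -> 0 < q u)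
  (HH : forall u, (1 <= u <= sigma)%nat -> 0 < H u)
  (Hcontr : forall e f, E e -> P f ->
     sum1 sigma (fun u => q u * (theta (F e) (F f)) ^ u)
     <= pi * sum1 sigma (fun u => q u * ((theta e f) ^ u + H u * (theta (F e) f) ^ u))) :
  picard_continuous E P theta F.
Proof.
  destruct Hbms as (_ & _ & Hnn & _).
  intros g h Hg Hh Hcv.
  set (a := fun n => theta (iterF F n g) h).
  set (b := fun n => theta (F (iterF F n g)) h).
  assert (Hb : Un_cv b 0).
  { intros eps He. destruct (Hcv eps He) as [N HN]. exists N. intros n Hn.
    apply (HN (S n)). lia. }
  set (Rn := fun n => pi * sum1 sigma (fun u => q u * (a n ^ u + H u * b n ^ u))).
  assert (HR : Un_cv Rn 0).
  { replace 0 with (pi * sum1 sigma (fun u => q u * (0 ^ u + H u * 0 ^ u)))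
      by (rewrite sum1_zero; ring).
    unfold Rn. apply CV_mult.
    - intros eps He. exists 0%nat. intros. unfold R_dist. rewrite Rminus_diag, Rabs_R0. lra.
    - apply (sum1_cv (fun n u => q u * (a n ^ u + H u * b n ^ u))).
      intro u. apply CV_mult.
      + intros eps He. exists 0%nat. intros. unfold R_dist. rewrite Rminus_diag, Rabs_R0. lra.
      + apply CV_plus. apply pow_cv; exact Hcv.
        apply CV_mult.
        * intros eps He. exists 0%nat. intros. unfold R_dist. rewrite Rminus_diag, Rabs_R0. lra.
        * apply pow_cv; exact Hb. }
  assert (Hq1 : 0 < q 1%nat) by (apply Hq; lia).
  intros eps He.
  destruct (HR (eps * q 1%nat)) as [N HN]. { apply Rmult_lt_0_compat; lra. }
  exists N. intros n Hn. specialize (HN n Hn).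
  unfold R_dist in *. rewrite Rminus_0_r in *.
  assert (HEn : E (iterF F n g)) by (apply iter_E; auto).
  set (t := theta (F (iterF F n g)) (F h)).
  assert (Ht : 0 <= t) by (apply Hnn; auto).
  assert (Hle : q 1%nat * t <= Rn n).
  { unfold Rn, a, b. eapply Rle_trans; [|apply Hcontr; auto].
    replace (q 1%nat * t) with ((fun u => q u * t ^ u) 1%nat) by (simpl; ring).
    apply (sum1_ge1 (fun u => q u * t ^ u)); auto. intros u Hu. apply Rmult_le_pos.
    - left; apply Hq; lia.
    - apply pow_le; auto. }
  rewrite Rabs_right by lra.
  apply Rle_lt_trans with (Rn n / q 1%nat).
  - apply (Rmult_le_reg_r (q 1%nat)); auto. field_simplify; lra.
  - apply (Rmult_lt_reg_r (q 1%nat)); auto. field_simplify; [|lra].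
    pose proof (Rle_abs (Rn n)). lra.
Qed.
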